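(* Let $G,H\colon\mathbb{R}^n\to\mathbb{R}^n$ be selfadjoint linear maps and assume that $$\wedge^k G+\wedge^k H=\beta\wedge^k\mathrm{id}$$ for some constant $\beta\in\mathbb{R}$ with $\beta\neq 0$ and some $k\in\{1,\dots,n-1\}$. Then $G$ and $H$ have a common orthonormal basis of eigenvectors. If $k\ge 2$, then $G$ or $H$ is an isomorphism.
   Context: For a linear map $A$ on $\mathbb{R}^n$, $\wedge^kA$ denotes the induced linear map on the exterior power $\bigwedge^k\mathbb{R}^n$, $(\wedge^kA)(v_1\wedge\dots\wedge v_k)=Av_1\wedge\dots\wedge Av_k$. *)

(* Defs.v *)
From HB Require Import structures.
From mathcomp Require Import all_boot all_order all_algebra.
From mathcomp Require Import reals.
Set Implicit Arguments. Unset Strict Implicit. Unset Printing Implicit Defensive.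
Import Order.TTheory GRing.Theory Num.Theory.
Local Open Scope ring_scope.

(* k-element subsets of {0,...,n-1}: the index set of the standard basis
   e_I = e_{i_1} /\ ... /\ e_{i_k} (i_1 < ... < i_k) of /\^k R^n. *)
Definition kset (n k : nat) := {I : {set 'I_n} | #|I| == k}.

(* the increasing enumeration 'I_k -> 'I_n of a k-subset I *)
Definition kidx (n k : nat) (I : kset n k) (i : 'I_k) : 'I_n :=
  @enum_val _ (mem (val I)) (cast_ord (esym (eqP (valP I))) i).

Definition minor (R : comNzRingType) (n k : nat) (A : 'M[R]_n) (I J : kset n k) : R :=
  \det (\matrix_(i < k, j < k) A (kidx I i) (kidx J j)).

(* Matrix of the induced map /\^k A in the standard basis (e_I)_I of /\^k R^n
   (the k-th compound matrix): its (I,J) entry is the coefficient of e_I in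
   A e_{j_1} /\ ... /\ A e_{j_k}, i.e. the minor det A[I,J]. *)
Definition ext_pow (R : comNzRingType) (n k : nat) (A : 'M[R]_n)
  : 'M[R]_#|{: kset n k}| :=
  \matrix_(a, b) minor A (enum_val a) (enum_val b).

(* Main.v *)
Require Import Defs.
From HB Require Import structures.
From mathcomp Require Import all_boot all_order all_algebra.
From mathcomp Require Import reals.
From mathcomp Require Import fingroup perm.
From mathcomp Require Import complex.
From mathcomp Require Import ring lra zify.
Import Order.TTheory GRing.Theory Num.Theory.
Set Implicit Arguments. Unset Strict Implicit. Unset Printing Implicit Defensive.
Local Open Scope ring_scope.


Section Kidx.
Variables (n k : nat).

Lemma kidx_inj (L : kset n k) : injective (kidx L).
Proof. by move=> i j /enum_val_inj /cast_ord_inj. Qed.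

Lemma kidx_in (L : kset n k) i : kidx L i \in val L.
Proof. exact: enum_valP. Qed.

Lemma kidx_surj (L : kset n k) x : x \in val L -> exists i, kidx L i = x.
Proof.
move=> xL; exists (cast_ord (eqP (valP L)) (enum_rank_in xL x)).
by rewrite /kidx cast_ordK enum_rankK_in.
Qed.

End Kidx.

Section CB.
Variables (R : comNzRingType) (n k : nat).

Definition hL (L : kset n k) (s : 'S_k) : {ffun 'I_k -> 'I_n} :=
  [ffun i => kidx L (s i)].

Lemma cauchy_binet (X : 'M[R]_(k, n)) (Y : 'M[R]_(n, k)) :
  \det (X *m Y) = \sum_(L : kset n k)
     \det (\matrix_(i, j) X i (kidx L j)) * \det (\matrix_(i, j) Y (kidx L i) j).
Proof.
pose F (f : {ffun 'I_k -> 'I_n}) :=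
  (\prod_i X i (f i)) * \det (\matrix_(i, j) Y (f i) j).
transitivity (\sum_f F f).
  rewrite /determinant.
  transitivity (\sum_(s : 'S_k) \sum_(f : {ffun 'I_k -> 'I_n})
     (-1) ^+ s * \prod_i (X i (f i) * Y (f i) (s i))).
    apply: eq_bigr => s _; rewrite -big_distrr /=; congr (_ * _).
    rewrite -(bigA_distr_bigA (fun i l => X i l * Y l (s i))) /=.
    by apply: eq_bigr => i _; rewrite mxE.
  rewrite exchange_big; apply: eq_bigr => f _ /=.
  rewrite /F /determinant big_distrr /=; apply: eq_bigr => s _.
  rewrite big_split /= mulrCA; congr (_ * (_ * _)).
  by apply: eq_bigr => i _; rewrite mxE.
transitivity (\sum_f \sum_(L : kset n k) (if f \in hL L @: setT then F f else 0)).
  apply: eq_bigr => f _.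
  case: (boolP (injectiveb f)) => [/injectiveP finj | /injectivePn [i1 [i2 Di12 Ef12]]]; last first.
    have -> : F f = 0.
      rewrite /F (determinant_alternate Di12) ?mulr0 // => j.
      by rewrite !mxE Ef12.
    by rewrite big1 // => L _; case: ifP.
  have cardf : #|f @: setT| == k by rewrite card_imset // cardsT card_ord.
  pose L0 : kset n k := exist _ (f @: setT) cardf.
  rewrite (bigD1 L0) //= big1 ?addr0.
    case: imsetP => // -[].
    pose g i := odflt i [pick j | kidx L0 j == f i].
    have gP i : kidx L0 (g i) = f i.
      rewrite /g; case: pickP => [j /eqP //|/= none].
      have [j Hj] := kidx_surj (L := L0) (x := f i) (imset_f _ (in_setT i)).
      by move: (none j); rewrite Hj eqxx.
    have ginj : injective g.
      by move=> i j eij; apply: finj; rewrite -gP eij gP.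
    exists (perm ginj) => //.
    by apply/ffunP => i; rewrite /hL !ffunE permE gP.
  move=> L NL; case: imsetP => // -[s _ fE].
  case/eqP: NL; apply: val_inj => /=; apply/setP => x.
  apply/idP/imsetP => [xL | [i _ ->]].
    have [j <-] := kidx_surj xL.
    by exists (s^-1 j)%g; rewrite // fE /hL ffunE permKV.
  by rewrite fE /hL ffunE kidx_in.
rewrite exchange_big; apply: eq_bigr => L _ /=.
rewrite -big_mkcond /= big_imset /=; last first.
  move=> s t _ _ est; apply/permP => i.
  by apply: (kidx_inj (L := L)); move/ffunP: est => /(_ i); rewrite !ffunE.
set DY := \det (\matrix_(i, j) Y (kidx L i) j).
rewrite (eq_bigl predT) ?/determinant ?big_distrl /= => [|s]; last by rewrite in_setT.
apply: eq_bigr => s _.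
rewrite /F.
have -> : \matrix_(i, j) Y (hL L s i) j = row_perm s (\matrix_(i, j) Y (kidx L i) j).
  by apply/matrixP => i j; rewrite !mxE ffunE.
rewrite row_permE det_mulmx det_perm -/DY mulrCA mulrA; congr (_ * _ * _).
by apply: eq_bigr => i _; rewrite !mxE ffunE.
Qed.

End CB.

Section Kperm.
Variables (n k : nat).

Lemma kidx_perm (L : kset n k) (f : 'I_k -> 'I_n) :
  injective f -> (forall a, f a \in val L) ->
  exists s : 'S_k, forall a, f a = kidx L (s a).
Proof.
move=> finj fL.
pose g i := odflt i [pick j | kidx L j == f i].
have gP i : kidx L (g i) = f i.
  rewrite /g; case: pickP => [j /eqP //|/= none].
  have [j Hj] := kidx_surj (fL i).
  by move: (none j); rewrite Hj eqxx.
have ginj : injective g by move=> i j eij; apply: finj; rewrite -gP eij gP.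
by exists (perm ginj) => a; rewrite permE gP.
Qed.

Lemma kset_sub (A : {set 'I_n}) m : (m <= #|A|)%N ->
  exists2 S : {set 'I_n}, S \subset A & #|S| = m.
Proof.
move=> mA; exists [set x | x \in take m (enum A)].
  by apply/subsetP => x; rewrite inE => /mem_take; rewrite mem_enum.
rewrite cardsE (card_uniqP _); last by rewrite take_uniq // enum_uniq.
by rewrite size_take -cardE; case: ltngtP mA.
Qed.

End Kperm.

Section Minors.
Variables (R : comNzRingType) (n k : nat).

Lemma det_rows_perm (A : 'M[R]_n) (L : kset n k) (f : 'I_k -> 'I_n) (g : 'I_k -> 'I_n) (s : 'S_k) :
  (forall a, f a = kidx L (s a)) ->
  \det (\matrix_(a, b) A (f a) (g b)) = (-1) ^+ s * \det (\matrix_(a, b) A (kidx L a) (g b)).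
Proof.
move=> fE.
have -> : \matrix_(a, b) A (f a) (g b) = row_perm s (\matrix_(a, b) A (kidx L a) (g b)).
  by apply/matrixP => a b; rewrite !mxE fE.
by rewrite row_permE det_mulmx det_perm.
Qed.

Lemma minorM (A B : 'M[R]_n) (I J : kset n k) :
  minor (A *m B) I J = \sum_(L : kset n k) minor A I L * minor B L J.
Proof.
rewrite /minor.
have -> : \matrix_(i, j) (A *m B) (kidx I i) (kidx J j) =
    (\matrix_(i, l) A (kidx I i) l) *m (\matrix_(l, j) B l (kidx J j)).
  by apply/matrixP => i j; rewrite !mxE; apply: eq_bigr => l _; rewrite !mxE.
rewrite cauchy_binet; apply: eq_bigr => L _.
by rewrite /minor; congr (_ * _); congr (determinant _); apply/matrixP => i j; rewrite !mxE.
Qed.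

Lemma ext_powE (A : 'M[R]_n) (I J : kset n k) :
  ext_pow k A (enum_rank I) (enum_rank J) = minor A I J.
Proof. by rewrite mxE !enum_rankK. Qed.

Lemma ext_powM (A B : 'M[R]_n) : ext_pow k (A *m B) = ext_pow k A *m ext_pow k B.
Proof.
apply/matrixP => a b; rewrite !mxE minorM.
rewrite (reindex (fun c : 'I_#|{: kset n k}| => enum_val c)) /=; last first.
  by exists enum_rank => x _; rewrite ?enum_valK ?enum_rankK.
by apply: eq_bigr => c _; rewrite !mxE.
Qed.

Lemma minor_diag (d : 'rV[R]_n) (I J : kset n k) :
  minor (diag_mx d) I J = if I == J then \prod_(j in val I) d 0 j else 0.
Proof.
case: eqP => [<-|IJ].
  rewrite /minor.
  have -> : \matrix_(i, j) diag_mx d (kidx I i) (kidx I j) = diag_mx (\row_i d 0 (kidx I i)).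
    by apply/matrixP => i j; rewrite !mxE (inj_eq (@kidx_inj _ _ I)).
  rewrite det_diag [RHS]big_enum_val /=.
  have e : k = #|val I| by rewrite (eqP (valP I)).
  rewrite (reindex (cast_ord (esym e))) /=; last first.
    by exists (cast_ord e) => x _; rewrite ?cast_ordK ?cast_ordKV.
  apply: eq_bigr => i _; rewrite mxE /kidx; congr (d 0 (enum_val _)).
  by apply: val_inj.
have [a aJ] : exists a, kidx I a \notin val J.
  apply/existsP; apply: contraT; rewrite negb_exists => /forallP H.
  case: IJ; apply: val_inj; apply/eqP; rewrite eqEcard (eqP (valP I)) (eqP (valP J)) leqnn andbT.
  apply/subsetP => x xI; have [b <-] := kidx_surj xI.
  by move: (H b); rewrite negbK.
rewrite /minor (expand_det_row _ a) big1 // => b _.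
rewrite !mxE; case: eqP => [e|_]; last by rewrite mulr0n mul0r.
by move: aJ; rewrite e kidx_in.
Qed.

End Minors.

Section Cramer.
Variables (R : fieldType) (n k : nat).

Lemma cramer (A : 'M[R]_n) (J : kset n k) i j :
  i \notin val J -> j \in val J -> minor A J J != 0 ->
  (forall J', J' != J -> minor A J' J = 0) -> A i j = 0.
Proof.
move=> iJ jJ MJ0 offd.
pose M := \matrix_(a, b) A (kidx J a) (kidx J b).
pose r := \row_b A i (kidx J b).
have radj : r *m \adj M = 0.
  apply/rowP => q; rewrite !mxE.
  pose f a := if a == q then i else kidx J a.
  pose N := \matrix_(a, b) A (f a) (kidx J b).
  have cof b : cofactor N q b = cofactor M q b.
    rewrite /cofactor; congr (_ * \det _).
    apply/matrixP => a c; rewrite !mxE /f.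
    by have -> : (lift q a == q) = false by rewrite eq_sym; apply/negbTE/neq_lift.
  have finj : injective f.
    move=> a b; rewrite /f; case: eqP => [->|aq]; case: eqP => [->|bq] //.
    - by move=> e; move: iJ; rewrite e kidx_in.
    - by move=> e; move: iJ; rewrite -e kidx_in.
    - exact: kidx_inj.
  have cardL : #|i |: (val J :\ kidx J q)| == k.
    rewrite cardsU1 !inE negb_and iJ orbT.
    have := cardsD1 (kidx J q) (val J); rewrite kidx_in (eqP (valP J)) => H.
    by rewrite -H.
  pose L : kset n k := exist (fun I : {set 'I_n} => #|I| == k) _ cardL.
  have fL a : f a \in val L.
    rewrite /f; case: (a =P q) => [_|aq]; rewrite !inE ?eqxx //.
    rewrite kidx_in (inj_eq (@kidx_inj _ _ J)) andbT.
    by apply/orP; right; apply/eqP.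
  have [s fs] := kidx_perm finj fL.
  have LJ : L != J.
    apply: contraNneq iJ => <-; rewrite /= !inE eqxx //.
  transitivity (\det N); last first.
    by rewrite (det_rows_perm A (kidx J) fs) -/(minor A L J) offd // mulr0.
  rewrite (expand_det_row _ q); apply: eq_bigr => b _.
  by rewrite !mxE /f eqxx cof.
have rM : r = 0.
  have : r *m \adj M *m M = 0 by rewrite radj mul0mx.
  rewrite -mulmxA mul_adj_mx mul_mx_scalar => /eqP.
  by rewrite scaler_eq0 (negPf MJ0) /= => /eqP.
have [b <-] := kidx_surj jJ.
by move/rowP: rM => /(_ b); rewrite !mxE.
Qed.

End Cramer.


Section EV.
Variable R : rcfType.
Local Notation C := (R[i]).
Local Notation toC := (real_complex R).

Lemma sym_eigen n (A : 'M[R]_n.+1) : A^T = A ->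
  exists a (u : 'cV[R]_n.+1), u != 0 /\ A *m u = a *: u.
Proof.
move=> Asym.
pose Ac := map_mx toC A.
have [l] := @spectral.eigenvalue_closed C _ Ac isT.
move=> lE; move/eigenvalueP: (lE) => [v vE vN0].
have vEk k : \sum_j v 0 j * toC (A j k) = l * v 0 k.
  by move/matrixP: vE => /(_ 0 k); rewrite !mxE => <-; apply: eq_bigr => j _; rewrite mxE.
have conjR x : (toC x)^* = toC x by apply/CrealP; apply/complex_realP; exists x.
pose s := \sum_k \sum_j v 0 j * toC (A j k) * (v 0 k)^*.
pose N := \sum_k v 0 k * (v 0 k)^*.
have sE : s = l * N.
  rewrite /s /N big_distrr; apply: eq_bigr => k _.
  by rewrite -big_distrl /= vEk -mulrA.
have sR : s^* = s.
  rewrite /s rmorph_sum /=.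
  under eq_bigr do rewrite rmorph_sum /=.
  under eq_bigr do under eq_bigr do rewrite !rmorphM /= conjCK conjR.
  rewrite exchange_big /=; apply: eq_bigr => k _; apply: eq_bigr => j _.
  have -> : A k j = A j k by rewrite -{1}Asym mxE.
  by ring.
have NR : N^* = N.
  rewrite /N rmorph_sum /=; apply: eq_bigr => k _.
  by rewrite rmorphM /= conjCK mulrC.
have N0 : N != 0.
  apply: contra vN0 => /eqP /psumr_eq0P H.
  have H' : forall k, v 0 k * (v 0 k)^* = 0.
    by move=> k; apply: H => // j _; apply: mul_conjC_ge0.
  apply/eqP/rowP => k; rewrite mxE.
  by move: (H' k) => /eqP; rewrite mul_conjC_eq0 => /eqP.
have lR : l^* = l.
  have : (l * N)^* = l * N by rewrite -sE sR.
  rewrite rmorphM /= NR => /eqP; rewrite -subr_eq0 -mulrBl mulf_eq0 (negPf N0) orbF subr_eq0.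
  by move/eqP.
have [a la] : exists a, l = toC a.
  by apply/complex_realP; apply/CrealP.
have : root (char_poly A) a.
  move: lE; rewrite eigenvalue_root_char /Ac -map_char_poly la.
  by rewrite fmorph_root.
rewrite -eigenvalue_root_char => /eigenvalueP [w wE wN0].
exists a, w^T; split; first by rewrite trmx_eq0.
by rewrite -{1}Asym -trmx_mul wE linearZ.
Qed.

Lemma dotE m (x y : 'cV[R]_m) : (x^T *m y) 0 0 = \sum_i x i 0 * y i 0.
Proof. by rewrite !mxE; apply: eq_bigr => i _; rewrite mxE. Qed.

Lemma dot_eq0 m (x : 'cV[R]_m) : (x^T *m x) 0 0 = 0 -> x = 0.
Proof.
rewrite dotE => /eqP; rewrite psumr_eq0 => [/allP H|i _]; last by rewrite -expr2 sqr_ge0.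
apply/matrixP => i j; rewrite ord1 mxE.
by move: (H i (mem_index_enum _)) => /= /eqP /eqP; rewrite mulf_eq0 orbb => /eqP.
Qed.

Lemma householder n (v : 'cV[R]_n.+1) : v^T *m v = 1%:M ->
  exists Q : 'M[R]_n.+1, Q^T *m Q = 1%:M /\ Q *m delta_mx 0 0 = v.
Proof.
move=> vv.
set e : 'cV[R]_n.+1 := delta_mx 0 0.
set w := v - e.
set d := (w^T *m w) 0 0.
have wwd : w^T *m w = d%:M by rewrite {1}[w^T *m w]mx11_scalar.
have ee : e^T *m e = 1%:M.
  by rewrite [LHS]mx11_scalar dotE (bigD1 0) //= big1 => [|i /negPf i0]; rewrite !mxE ?i0 ?eqxx ?mulr0 ?mulr1 ?addr0.
have ve : v^T *m e = (v 0 0)%:M.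
  by rewrite [LHS]mx11_scalar dotE (bigD1 0) //= big1 => [|i /negPf i0]; rewrite !mxE ?i0 ?eqxx ?mulr0 ?mulr1 ?addr0.
have ev : e^T *m v = (v 0 0)%:M.
  by rewrite -[e^T *m v]trmxK trmx_mul trmxK ve tr_scalar_mx.
have wT : w^T = v^T - e^T by rewrite linearB.
have dE : d = 2 - 2 * v 0 0.
  have : w^T *m w = (2 - 2 * v 0 0)%:M.
    rewrite wT mulmxBl !mulmxBr vv ve ev ee.
    apply/matrixP => i j; rewrite !ord1 !mxE /=; ring.
  by rewrite wwd => /matrixP /(_ 0 0); rewrite !mxE /= !mulr1n.
have we : w^T *m e = (v 0 0 - 1)%:M.
  rewrite wT mulmxBl ve ee; apply/matrixP => i j; rewrite !ord1 !mxE /=; ring.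
set c := 2 / d.
have c2 : c * c * d = c *+ 2.
  have [d0|dn0] := eqVneq d 0; first by rewrite /c d0 invr0 !mulr0 mul0rn.
  by rewrite /c; field.
exists (1%:M - c *: (w *m w^T)).
have QT : (1%:M - c *: (w *m w^T))^T = 1%:M - c *: (w *m w^T).
  by rewrite linearB /= linearZ /= trmx_mul trmxK trmx1.
split.
  rewrite QT mulmxBl !mulmxBr !mul1mx mulmx1.
  have -> : c *: (w *m w^T) *m (c *: (w *m w^T)) = (c * c * d) *: (w *m w^T).
    rewrite -scalemxAl -scalemxAr scalerA mulmxA -[w *m w^T *m w]mulmxA wwd.
    by rewrite mul_mx_scalar -scalemxAl scalerA.
  rewrite c2; apply/matrixP => i j; rewrite !mxE /= mulrnAl; ring.
rewrite mulmxBl mul1mx -scalemxAl -mulmxA we mul_mx_scalar scalerA.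
have [d0|dn0] := eqVneq d 0.
  have w0 : w = 0 by apply: dot_eq0.
  by rewrite w0 scaler0 subr0; apply/eqP; rewrite eq_sym -subr_eq0 -/w w0.
have -> : c * (v 0 0 - 1) = -1.
  rewrite /c; rewrite dE in dn0 *; field.
  by [].
by rewrite scaleNr scale1r opprK /w addrC subrK.
Qed.

Theorem spectral n (A : 'M[R]_n) : A^T = A ->
  exists Q : 'M[R]_n, Q^T *m Q = 1%:M /\ is_diag_mx (Q^T *m A *m Q).
Proof.
elim: n A => [|n IH] A Asym.
  exists 1%:M; split; first by rewrite trmx1 mulmx1.
  by apply/is_diag_mxP => -[].
have [a [u [uN0 uE]]] := sym_eigen Asym.
set r := (u^T *m u) 0 0.
have r0 : 0 < r.
  rewrite lt_def; apply/andP; split; first by apply: contra uN0 => /eqP /dot_eq0 ->.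
  by rewrite /r dotE sumr_ge0 // => i _; rewrite -expr2 sqr_ge0.
set v := (Num.sqrt r)^-1 *: u.
have vv : v^T *m v = 1%:M.
  rewrite [v^T]linearZ /= -scalemxAl /v -scalemxAr scalerA [u^T *m u]mx11_scalar -/r.
  rewrite scale_scalar_mx -invfM -expr2 sqr_sqrtr ?ltW // mulVf //.
  by rewrite gt_eqF.
have [Q1 [Q1o Q1e]] := householder vv.
set B := Q1^T *m A *m Q1.
have Bsym : B^T = B by rewrite !trmx_mul trmxK Asym mulmxA.
have Av : A *m v = a *: v by rewrite /v -scalemxAr uE scalerA mulrC -scalerA.
have Be : col 0 B = a *: delta_mx 0 0.
  by rewrite colE /B -mulmxA Q1e -mulmxA Av -scalemxAr -Q1e mulmxA Q1o mul1mx.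
have Bc i : B i 0 = a * (i == 0)%:R.
  by move/matrixP: Be => /(_ i 0); rewrite !mxE eqxx andbT.
have Br j : B 0 j = a * (j == 0)%:R.
  by rewrite -Bc -{1}Bsym mxE.
set B1 := drsubmx (B : 'M_(1 + n)).
have BB : Q1^T *m A *m Q1 = B by []. clearbody B.
have l0 : lshift n (0 : 'I_1) = 0 :> 'I_n.+1 by apply: val_inj.
have BE : (B : 'M_(1 + n)) = block_mx (a%:M : 'M_1) 0 0 B1.
  rewrite -{1}(@submxK _ 1 n 1 n B); congr block_mx.
  - by apply/matrixP => i j; rewrite !ord1 !mxE l0 Bc eqxx mulr1 mulr1n.
  - apply/matrixP => i j; rewrite !ord1 !mxE l0 Br.
    by have -> : (rshift 1 j == 0 :> 'I_n.+1) = false by []; rewrite mulr0.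
  - apply/matrixP => i j; rewrite !ord1 !mxE l0 Bc.
    by have -> : (rshift 1 i == 0 :> 'I_n.+1) = false by []; rewrite mulr0.
have B1sym : B1^T = B1 by rewrite /B1 trmx_drsub Bsym.
have [Q2 [Q2o Q2d]] := IH B1 B1sym.
have TB : (block_mx (1%:M : 'M_1) 0 0 Q2)^T = block_mx 1%:M 0 0 Q2^T :> 'M_(1 + n).
  by rewrite tr_block_mx !trmx0 trmx1.
have M1 : block_mx (1%:M : 'M_1) 0 0 Q2^T *m block_mx 1%:M 0 0 Q2 = 1%:M :> 'M_(1 + n).
  rewrite mulmx_block !mulmx0 !mul0mx !mulmx1 !addr0 !add0r Q2o.
  by rewrite -scalar_mx_block.
have M2 : block_mx (1%:M : 'M_1) 0 0 Q2^T *m block_mx (a%:M : 'M_1) 0 0 B1 *m block_mx 1%:M 0 0 Q2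
   = block_mx (a%:M : 'M_1) 0 0 (Q2^T *m B1 *m Q2) :> 'M_(1 + n).
  by rewrite mulmx_block !mulmx0 !mul0mx !mul1mx !addr0 !add0r mulmx_block !mulmx0 !mul0mx !mulmx1 !addr0 !add0r.
exists (Q1 *m block_mx (1%:M : 'M_1) 0 0 Q2); split.
  rewrite trmx_mul TB mulmxA -[_ *m Q1^T *m Q1]mulmxA Q1o mulmx1.
  exact: M1.
rewrite trmx_mul TB !mulmxA -(mulmxA _ Q1^T) -(mulmxA _ (Q1^T *m A)) BB BE M2.

by rewrite (@is_diag_block_mx _ 1 n 1 n) // !eqxx scalar_mx_is_diag Q2d.
Qed.

Lemma le_sum_term (I : finType) (F : I -> R) i :
  (forall j, 0 <= F j) -> F i <= \sum_j F j.
Proof. by move=> F0; rewrite (bigD1 i) //= lerDl sumr_ge0. Qed.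

Lemma eig_bound n (A : 'M[R]_n) (u : 'I_n -> R) mu :
  (exists i, u i != 0) -> (forall l, \sum_m A l m * u m = mu * u l) ->
  `|mu| <= \sum_i \sum_j `|A i j|.
Proof.
move=> [i0 ui0] uE.
case: (@arg_maxP _ _ _ i0 xpredT (fun l => `|u l|) isT) => l _ lmax.
have ul0 : 0 < `|u l| by apply: lt_le_trans (lmax i0 isT); rewrite normr_gt0.
have H1 : `|mu| * `|u l| <= (\sum_j `|A l j|) * `|u l|.
  rewrite -normrM -uE mulr_suml.
  apply: le_trans (ler_norm_sum _ _ _) _; apply: ler_sum => m _.
  by rewrite normrM ler_wpM2l //; apply: lmax.
apply: (@le_trans _ _ (\sum_j `|A l j|)).
  by rewrite -(ler_pM2r ul0).
by rewrite [X in _ <= X](bigD1 l) //= lerDl sumr_ge0 // => i _; rewrite sumr_ge0.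
Qed.

Lemma common_diag n (A : 'M[R]_n) (h : 'I_n -> R) : A^T = A ->
  (forall i j, h i != h j -> A i j = 0) ->
  exists P : 'M[R]_n, P^T *m P = 1%:M /\ is_diag_mx (P^T *m A *m P) /\
     is_diag_mx (P^T *m diag_mx (\row_i h i) *m P).
Proof.
move=> Asym Ah.
set K := \sum_i \sum_j `|A i j|.
have K0 : 0 <= K by rewrite sumr_ge0 // => i _; rewrite sumr_ge0.
set T := \sum_i \sum_j (if h i != h j then `|h i - h j|^-1 else 0).
set t := (K *+ 2 + 1) * T.
have Tge i j : h i != h j -> `|h i - h j|^-1 <= T.
  move=> hij; rewrite /T (bigD1 i) //= (bigD1 j) //= hij -addrA lerDl.
  have ge0 m m' : 0 <= (if h m != h m' then `|h m - h m'|^-1 else 0).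
    by case: ifP => // _; rewrite invr_ge0.
  by rewrite addr_ge0 // sumr_ge0 // => m _; rewrite sumr_ge0.
have tbig i j : h i != h j -> K *+ 2 < `|t| * `|h i - h j|.
  move=> hij.
  have hd0 : 0 < `|h i - h j| by rewrite normr_gt0 subr_eq0.
  have T0 : 0 <= T by apply: le_trans (Tge _ _ hij); rewrite invr_ge0.
  rewrite /t normrM (ger0_norm T0) ger0_norm; last by rewrite addr_ge0 // mulrn_wge0.
  apply: lt_le_trans (_ : K *+ 2 + 1 <= _); first by rewrite ltrDl.
  have Th : 1 <= T * `|h i - h j|.
    rewrite -(mulVf (lt0r_neq0 hd0)); apply: ler_wpM2r; [exact: ltW hd0 | exact: Tge].
  by rewrite -mulrA -{1}[K *+ 2 + 1]mulr1 ler_wpM2l ?addr_ge0 ?mulrn_wge0.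
set D := diag_mx (\row_i h i).
set M := A + t *: D.
have Msym : M^T = M by rewrite /M linearD linearZ /= Asym tr_diag_mx.
have [P [Po Pd]] := spectral Msym.
have Po' : P *m P^T = 1%:M := mulmx1C Po.
have [d dE] : exists d, P^T *m M *m P = diag_mx d by apply/diag_mxP.
have MP : M *m P = P *m diag_mx d by rewrite -dE !mulmxA Po' mul1mx.
have eig p l : \sum_m M l m * P m p = d 0 p * P l p.
  by move/matrixP: MP => /(_ l p); rewrite mul_mx_diag !mxE mulrC.
have Mentry l m : M l m = A l m + t * (h l *+ (l == m)) by rewrite !mxE.
have lev p i j : P i p != 0 -> P j p != 0 -> h i = h j.
  move=> pi pj; apply/eqP; apply: contraT => hij.
  have bnd x : P x p != 0 -> `|d 0 p - t * h x| <= K.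
    move=> px; apply: (eig_bound (u := fun m => if h m == h x then P m p else 0)).
      by exists x; rewrite eqxx.
    move=> l; case: (eqVneq (h l) (h x)) => hl.
      transitivity (\sum_m A l m * P m p).
        apply: eq_bigr => m _; case: eqP => // hm.
        by rewrite Ah ?mul0r // hl eq_sym; apply/eqP.
      have := eig p l.
      rewrite (eq_bigr (fun m => A l m * P m p + t * (h l *+ (l == m)) * P m p)) => [|m _]; last first.
        by rewrite Mentry mulrDl.
      have S2 : \sum_m t * (h l *+ (l == m)) * P m p = t * h l * P l p.
        rewrite (bigD1 l) //= big1 => [|m /negPf lm]; first by rewrite eqxx mulr1n addr0.
        by rewrite eq_sym lm mulr0n mulr0 mul0r.
      rewrite big_split /= S2 => E.
      by rewrite mulrBl -E hl; ring.
    rewrite mulr0 big1 // => m _; case: eqP => hm; last by rewrite mulr0.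
    by rewrite Ah ?mul0r // hm.
  have bi := bnd i pi; have bj := bnd j pj; have tb := tbig i j hij.
  have : `|t| * `|h i - h j| <= K *+ 2.
    rewrite -normrM.
    have -> : t * (h i - h j) = (d 0 p - t * h j) - (d 0 p - t * h i) by ring.
    by apply: le_trans (ler_normB _ _) _; rewrite mulr2n lerD.
  by rewrite leNgt tb.
pose c p := odflt 0 (omap h [pick i | P i p != 0]).
have cP p l : h l * P l p = c p * P l p.
  have [->|plN0] := eqVneq (P l p) 0; first by rewrite !mulr0.
  rewrite /c; case: pickP => [i /= pi|/(_ l) /=]; last by rewrite plN0.
  by rewrite (lev p l i).
have DP : D *m P = P *m diag_mx (\row_p c p).
  by apply/matrixP => l p; rewrite mul_diag_mx mul_mx_diag !mxE cP mulrC.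
have PDP : P^T *m D *m P = diag_mx (\row_p c p).
  by rewrite -mulmxA DP mulmxA Po mul1mx.
exists P; split => //; split; last by rewrite PDP diag_mx_is_diag.
have AE : A = M - t *: D by rewrite /M addrK.
rewrite AE mulmxBr mulmxBl dE -scalemxAr -scalemxAl PDP.
apply/is_diag_mxP => i j ij; rewrite !mxE; case: (i =P j) => [e|_]; first by move: ij; rewrite e eqxx.
by rewrite !mulr0n mulr0 subr0.
Qed.
End EV.


Theorem lemma3p2 (R : realType) (n k : nat) (G H : 'M[R]_n) (beta : R) :
  G^T = G -> H^T = H ->
  (1 <= k)%N -> (k <= n - 1)%N ->
  beta != 0 ->
  ext_pow k G + ext_pow k H = beta *: ext_pow k (1%:M : 'M[R]_n) ->
  (exists v : 'I_n -> 'cV[R]_n,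
      (forall i j : 'I_n, \sum_(l < n) v i l ord0 * v j l ord0 = (i == j)%:R) /\
      (forall i : 'I_n, exists lam mu : R,
          G *m v i = lam *: v i /\ H *m v i = mu *: v i)) /\
  ((2 <= k)%N -> G \in unitmx \/ H \in unitmx).
Proof.
move=> Gs Hs k1 kn b0 E.
have m1 (I J : kset n k) : minor (1%:M : 'M[R]_n) I J = (I == J)%:R.
  rewrite -diag_const_mx minor_diag; case: eqP => _ //.
  by rewrite big1 // => j _; rewrite mxE.
have transfer (P : 'M[R]_n) : P^T *m P = 1%:M -> forall I J : kset n k,
   minor (P^T *m G *m P) I J + minor (P^T *m H *m P) I J = beta * (I == J)%:R.
  move=> Po I J.
  have : ext_pow k (P^T *m G *m P) + ext_pow k (P^T *m H *m P) =
         beta *: ext_pow k (1%:M : 'M[R]_n).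
    rewrite !ext_powM -mulmxDl -mulmxDr E -scalemxAr -scalemxAl -!ext_powM.
    by rewrite mulmx1 Po.
  move/matrixP => /(_ (enum_rank I) (enum_rank J)).
  by rewrite !mxE !enum_rankK m1.
have [Q [Qo Qd]] := spectral Hs.
have [dh dhE] : exists d, Q^T *m H *m Q = diag_mx d by apply/diag_mxP.
set G' := Q^T *m G *m Q.
have G's : G'^T = G' by rewrite /G' !trmx_mul trmxK Gs mulmxA.
have mG' (I J : kset n k) :
    minor G' I J = (if I == J then beta - \prod_(j in val I) dh 0 j else 0).
  have := transfer Q Qo I J; rewrite dhE minor_diag.
  case: (I =P J) => [<-|_] /= T.
    by rewrite -[beta]mulr1 -T addrK.
  by move: T; rewrite mulr0 addr0.
have Gh : forall i j, dh 0 i != dh 0 j -> G' i j = 0.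
  move=> i j; apply: contraTeq => Gij0; apply/negPn/eqP.
  have [->//|ij] := eqVneq i j.
  have cX : #|[set i; j]| = 2%N by rewrite cards2 ij.
  have kS : (k.-1 <= #|~: [set i; j]|)%N.
    have e := cardsC [set i; j]; rewrite cX card_ord in e; lia.
  have [S SC cS] := kset_sub kS.
  have iS : i \notin S by apply/negP => /(subsetP SC); rewrite !inE eqxx.
  have jS : j \notin S by apply/negP => /(subsetP SC); rewrite !inE eqxx orbT.
  have cJ1 : #|j |: S| == k by rewrite cardsU1 jS cS; apply/eqP; lia.
  have cJ2 : #|i |: S| == k by rewrite cardsU1 iS cS; apply/eqP; lia.
  pose J1 : kset n k := exist (fun I : {set 'I_n} => #|I| == k) _ cJ1.
  pose J2 : kset n k := exist (fun I : {set 'I_n} => #|I| == k) _ cJ2.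
  have z1 : minor G' J1 J1 = 0.
    apply: contraTeq Gij0 => mn; apply/negPn/eqP; apply: (cramer (J := J1)) => //.
    - by rewrite /= !inE negb_or ij iS.
    - by rewrite /= !inE eqxx.
    - by move=> J' ne; rewrite mG' (negPf ne).
  have z2 : minor G' J2 J2 = 0.
    have Gji0 : G' j i != 0 by rewrite -G's mxE.
    apply: contraTeq Gji0 => mn; apply/negPn/eqP; apply: (cramer (J := J2)) => //.
    - by rewrite /= !inE negb_or eq_sym ij jS.
    - by rewrite /= !inE eqxx.
    - by move=> J' ne; rewrite mG' (negPf ne).
  move: z1 z2; rewrite !mG' !eqxx /= !big_setU1 //= => /eqP z1 /eqP z2.
  rewrite subr_eq0 in z1; rewrite subr_eq0 in z2.
  have PS : \prod_(l in S) dh 0 l != 0.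
    by apply: contra b0 => /eqP P0; rewrite (eqP z1) P0 mulr0.
  by apply: (mulIf PS); rewrite -(eqP z1) -(eqP z2).
have [P2 [P2o [P2G P2H]]] := common_diag G's Gh.
set P := Q *m P2.
have Po : P^T *m P = 1%:M.
  by rewrite /P trmx_mul mulmxA -(mulmxA P2^T) Qo mulmx1 P2o.
have Po' : P *m P^T = 1%:M := mulmx1C Po.
have PG : is_diag_mx (P^T *m G *m P).
  by move: P2G; rewrite /P /G' trmx_mul !mulmxA.
have PH : is_diag_mx (P^T *m H *m P).
  have e : diag_mx (\row_i dh 0 i) = diag_mx dh by congr diag_mx; apply/rowP => i; rewrite mxE.
  by move: P2H; rewrite e -dhE /P trmx_mul !mulmxA.
have [dg dgE] : exists d, P^T *m G *m P = diag_mx d by apply/diag_mxP.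
have [dk dkE] : exists d, P^T *m H *m P = diag_mx d by apply/diag_mxP.
have eigcol (A : 'M[R]_n) d i : P^T *m A *m P = diag_mx d -> A *m col i P = d 0 i *: col i P.
  move=> AE.
  have AP : A *m P = P *m diag_mx d by rewrite -AE !mulmxA Po' mul1mx.
  apply/matrixP => l z; rewrite ord1.
  transitivity ((A *m P) l i).
    by rewrite !mxE; apply: eq_bigr => m _; rewrite mxE.
  by rewrite AP mul_mx_diag !mxE mulrC.
split.
  exists (fun i => col i P); split.
    move=> i j; move/matrixP: Po => /(_ i j); rewrite !mxE => <-.
    by apply: eq_bigr => l _; rewrite !mxE.
  by move=> i; exists (dg 0 i), (dk 0 i); split; apply: eigcol.
move=> k2.
case: (boolP (G \in unitmx)) => [Gu|Gnu]; first by left.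
case: (boolP (H \in unitmx)) => [Hu|Hnu]; first by right.
exfalso.
have zdet (A : 'M[R]_n) d : A \notin unitmx -> P^T *m A *m P = diag_mx d -> exists a, d 0 a = 0.
  move=> Anu AE.
  have : \det (diag_mx d) = 0.
    rewrite -AE !det_mulmx; move: Anu; rewrite unitmxE unitfE negbK => /eqP ->.
    by rewrite mulr0 mul0r.
  rewrite det_diag => /eqP /prodf_eq0 [a _ /eqP ha]; by exists a.
have [a ha] := zdet G dg Gnu dgE.
have [b hb] := zdet H dk Hnu dkE.
set X := [set a; b].
have cX : (#|X| <= 2)%N by rewrite cards2; case: (a != b).
have kS : (k - #|X| <= #|~: X|)%N.
  have e := cardsC X; rewrite card_ord in e; lia.
have [S SC cS] := kset_sub kS.
have XS : X :&: S = set0.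
  apply/setP => x; rewrite !inE; apply/negbTE; apply/negP => /andP [xX xS].
  by move: (subsetP SC x xS); rewrite !inE xX.
have cJ : #|X :|: S| == k.
  by rewrite cardsU XS cards0 subn0 cS; apply/eqP; lia.
pose J : kset n k := exist (fun I : {set 'I_n} => #|I| == k) _ cJ.
have := transfer P Po J J.
rewrite dgE dkE !minor_diag !eqxx mulr1 /=.
rewrite (bigD1 a) /=; last by rewrite !inE eqxx.
rewrite [X in _ + X = _](bigD1 b) /=; last by rewrite !inE eqxx orbT.
rewrite ha hb !mul0r addr0 => b0'.
by move: b0; rewrite -b0' eqxx.
Qed.
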